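(* Let $t,\ell,m$ be integers with $1 \le t \le \ell \le m$. Then $$\hat{w}_1(t;\ell,m)=q^{\ell+m-2}\,\nu_{t-1}(\ell-1,m-1).$$
   Context: $q$ is a prime power and $\mathbb{F}_q$ the field with $q$ elements. For nonnegative integers $a,b,t$, $\mu_t(a,b)$ denotes the number of $a\times b$ matrices over $\mathbb{F}_q$ of rank exactly $t$ (so $\mu_0(a,b)=1$), and $\nu_t(a,b)=\sum_{s=0}^{t}\mu_s(a,b)$ is the number of $a\times b$ matrices over $\mathbb{F}_q$ of rank at most $t$. For an $\ell\times m$ matrix $M=(m_{ij})$ and $0\le r\le \ell$, the $r$-th partial trace is $\tau_r(M)=m_{11}+m_{22}+\cdots+m_{rr}$ (with $\tau_0=0$). For $0\le r\le \ell$ and $1\le t\le \ell$, define $$\hat{w}_r(t;\ell,m)=\frac{1}{q-1}\,\bigl|\{M\in \mathrm{Mat}_{\ell\times m}(\mathbb{F}_q): 1\le \mathrm{rk}(M)\le t,\ \tau_r(M)\ne 0\}\bigr|.$$ *)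

(* Defs.v *)
From HB Require Import structures.
From mathcomp Require Import all_boot all_order all_algebra.
Set Implicit Arguments. Unset Strict Implicit. Unset Printing Implicit Defensive.
Import GRing.Theory.

Definition mu (F : finFieldType) (t a b : nat) : nat :=
  #|[set A : 'M[F]_(a, b) | \rank A == t]|.

Definition nu (F : finFieldType) (t a b : nat) : nat :=
  \sum_(0 <= s < t.+1) mu F s a b.

Definition ptrace (F : finFieldType) (l m r : nat) (M : 'M[F]_(l, m)) : F :=
  (\sum_(i < l | (i < r)%N) \sum_(j < m | nat_of_ord j == nat_of_ord i) M i j)%R.

Definition what (F : finFieldType) (r t l m : nat) : rat :=
  ((#|[set M : 'M[F]_(l, m) | (1 <= \rank M <= t)%N && (ptrace r M != 0%R)]|)%:R
    / (#|F|.-1)%:R)%R.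

(* Main.v *)
Require Import Defs.
From HB Require Import structures.
From mathcomp Require Import all_boot all_order all_algebra.
Import GRing.Theory.
Local Open Scope ring_scope.

Section S.
Variables (F : finFieldType) (l m : nat).

Lemma rank_schur (a : F) (u : 'M[F]_(1, m)) (v : 'M[F]_(l, 1)) (N : 'M[F]_(l, m)) :
  a != 0 -> \rank (block_mx a%:M u v (N + a^-1 *: (v *m u))) = (1 + \rank N)%N.
Proof.
move=> a0.
set L : 'M[F]_(1 + l) := block_mx 1%:M 0 (- (a^-1 *: v)) 1%:M.
set R : 'M[F]_(1 + m) := block_mx 1%:M (- (a^-1 *: u)) 0 1%:M.
have LU : L \in unitmx by rewrite unitmxE det_lblock !det1 mulr1 unitr1.
have RU : R \in unitmx by rewrite unitmxE det_ublock !det1 mulr1 unitr1.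
have E : L *m block_mx a%:M u v (N + a^-1 *: (v *m u)) *m R = block_mx a%:M 0 0 N.
  rewrite /L /R !mulmx_block !mul1mx !mul0mx !mulmx1 !mulmx0 !addr0.
  have h1 : a%:M *m - (a^-1 *: u) + u = 0.
    by rewrite mul_scalar_mx scalerN scalerA mulfV // scale1r addNr.
  have h2 : - (a^-1 *: v) *m a%:M + v = 0.
    by rewrite mul_mx_scalar scalerN scalerA mulfV // scale1r addNr.
  by rewrite h1 h2 mul0mx add0r mulNmx -scalemxAl addrCA addNr addr0.
transitivity (\rank (L *m block_mx a%:M u v (N + a^-1 *: (v *m u)) *m R)).
  by rewrite mxrankMfree ?row_free_unit // eqmxMfull ?row_full_unit.
by rewrite E rank_diag_block_mx mxrank_unit // unitmxE det_scalar1 unitfE.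
Qed.

Definition phi (x : F * 'M[F]_(1, m) * 'M[F]_(l, 1) * 'M[F]_(l, m)) : 'M[F]_(1 + l, 1 + m) :=
  block_mx (x.1.1.1)%:M x.1.1.2 x.1.2 (x.2 + (x.1.1.1)^-1 *: (x.1.2 *m x.1.1.2)).

Lemma phi_inj : injective phi.
Proof.
move=> [[[a u] v] N] [[[b u'] v'] N'] /eq_block_mx [h1 h2 h3 h4] /=.
simpl in *.
have eab : a = b by have := congr1 (fun A : 'M[F]_1 => A ord0 ord0) h1; rewrite !mxE.
subst; by move/addIr: h4 => ->.
Qed.

Lemma block00 (A : 'M[F]_1) B C D :
  (block_mx A B C D : 'M[F]_(1 + l, 1 + m)) ord0 ord0 = A ord0 ord0.
Proof.
rewrite -(block_mxEul A B C D); congr (block_mx A B C D _ _); exact: val_inj.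
Qed.

Lemma ul00 (M : 'M[F]_(1 + l, 1 + m)) : ulsubmx M = (M ord0 ord0)%:M.
Proof.
apply/matrixP => i j; rewrite !ord1 !mxE /=; congr (M _ _); exact: val_inj.
Qed.

Lemma setE t : (0 < t)%N ->
  [set M : 'M[F]_(1 + l, 1 + m) | (1 <= \rank M <= t)%N && (M ord0 ord0 != 0)] =
  phi @: [set x | (x.1.1.1 != 0) && (\rank x.2 <= t.-1)%N].
Proof.
move=> t0; apply/setP => M; rewrite inE; apply/andP/imsetP.
- move=> [/andP[r1 rt] a0].
  set a := M ord0 ord0.
  exists (a, ursubmx M, dlsubmx M, drsubmx M - a^-1 *: (dlsubmx M *m ursubmx M)).
    rewrite inE /= a0 /=.
    set N' := drsubmx M - _.
    have hD : drsubmx M = N' + a^-1 *: (dlsubmx M *m ursubmx M) by rewrite /N' subrK.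
    move: rt; rewrite -{1}[M]submxK ul00 -/a hD rank_schur // add1n.
    by case: (t).
  by rewrite /phi /= subrK -ul00 submxK.
- move=> [[[[a u] v] N]]; rewrite inE /= => /andP[a0 rN] ->.
  rewrite /phi /= rank_schur // block00 mxE eqxx mulr1n add1n; split => //.
  by move: rN t0; case: (t).
Qed.
End S.

Lemma card_rank_le (F : finFieldType) a b n :
  #|[set A : 'M[F]_(a, b) | (\rank A <= n)%N]| = nu F n a b.
Proof.
rewrite /nu; elim: n => [|n IH].
  rewrite big_nat1 /mu; apply: eq_card => A; rewrite !inE leqn0 //.
rewrite big_nat_recr //= -IH /mu.
rewrite -(cardsID [set A : 'M[F]_(a, b) | (\rank A <= n)%N] [set A : 'M[F]_(a, b) | (\rank A <= n.+1)%N]).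
apply: f_equal2; apply: eq_card => A; rewrite !inE.
  by case h: (\rank A <= n)%N; rewrite ?andbT ?andbF // leqW.
by rewrite -ltnNge eqn_leq andbC.
Qed.

Lemma ptrace1 (F : finFieldType) l m (M : 'M[F]_(l.+1, m.+1)) : ptrace 1 M = M ord0 ord0.
Proof.
rewrite /ptrace (big_pred1 ord0); last by move=> i; rewrite /= ltnS leqn0.
by rewrite (big_pred1 ord0) // => j.
Qed.

Local Close Scope ring_scope.

Theorem proposition1 (F : finFieldType) (t l m : nat) :
  1 <= t -> t <= l -> l <= m ->
  what F 1 t l m = ((#|F| ^ (l + m - 2) * nu F t.-1 l.-1 m.-1)%N)%:R%R.
Proof.
case: l => [|l]; first by case: t => // ? ?; rewrite leqn0.
case: m => [|m]; first by [].
move=> t0 _ _.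
have q1 : (0 < #|F|.-1)%N.
  by rewrite -(cardsC1 (0 : F)%R) card_gt0; apply/set0Pn; exists 1%R; rewrite !inE oner_eq0.
rewrite /what.
have -> : [set M : 'M[F]_(l.+1, m.+1) | (1 <= \rank M <= t)%N && (ptrace 1 M != 0)%R] =
   [set M : 'M[F]_(1 + l, 1 + m) | (1 <= \rank M <= t)%N && (M ord0 ord0 != 0)%R].
  by apply/setP => M; rewrite !inE ptrace1.
rewrite setE // card_imset; last exact: phi_inj.
have -> : [set x : F * 'M[F]_(1, m) * 'M[F]_(l, 1) * 'M[F]_(l, m) | (x.1.1.1 != 0)%R && (\rank x.2 <= t.-1)%N]
  = setX (setX (setX [set~ (0:F)%R] setT) setT) [set N : 'M[F]_(l, m) | (\rank N <= t.-1)%N].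
  by apply/setP => x; rewrite !inE !andbT.
rewrite !cardsX cardsC1 !cardsT !card_mx card_rank_le /=.
rewrite mul1n muln1 addnS addSn subn2 /= expnD.
rewrite -!mulnA natrM mulrC mulKf; first by rewrite mulnCA.
by rewrite Num.Theory.pnatr_eq0 -lt0n.
Qed.
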